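(* Let $p\ne q$ be primes, $G=\mathbb{Z}_p^2\times\mathbb{Z}_q^2$, and let $S\subseteq G$ be spectral with $\gcd(|S|,p^2q^2)=pq$ and $pq<|S|<pq\min\{p,q\}$. Then there exist nonzero $u\in\mathbb{Z}_p^2$ and nonzero $v\in\mathbb{Z}_q^2$ such that $\lambda u\notin S-S$ for every $\lambda\in\mathbb{Z}_p\setminus\{0\}$ and $\mu v\notin S-S$ for every $\mu\in\mathbb{Z}_q\setminus\{0\}$.
   Context: $\mathbb{Z}_p^2$ and $\mathbb{Z}_q^2$ are regarded as subgroups of $G$ (elements $(u,0)$ and $(0,v)$). For $w=(u,v)\in G$ define $\chi_w(a,b)=\exp\big(2\pi i(\tfrac{u\cdot a}{p}+\tfrac{v\cdot b}{q})\big)$ and $\chi(S)=\sum_{s\in S}\chi(s)$. $S$ is spectral if there is $\Lambda\subseteq G$ with $|\Lambda|=|S|$ and $\chi_{\lambda-\lambda'}(S)=0$ for all distinct $\lambda,\lambda'\in\Lambda$. *)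

(* Defs.v *)
From HB Require Import structures.
From mathcomp Require Import all_boot all_order all_algebra.
From mathcomp Require Import algC.
Set Implicit Arguments. Unset Strict Implicit. Unset Printing Implicit Defensive.
Import Order.TTheory GRing.Theory Num.Theory.
Local Open Scope ring_scope.

(* zeta n = exp(2 pi i / n) in algC: n.-root (-1) is the n-th root of -1
   with minimal nonnegative argument, i.e. exp(i pi / n). *)
Definition zeta (n : nat) : algC := (n.-root (-1)) ^+ 2.

Notation Gpq p q := (('Z_p * 'Z_p) * ('Z_q * 'Z_q))%type.

Definition dot2 (n : nat) (u a : 'Z_n * 'Z_n) : 'Z_n := u.1 * a.1 + u.2 * a.2.

Definition chi (p q : nat) (w x : Gpq p q) : algC :=
  zeta p ^+ (nat_of_ord (dot2 w.1 x.1)) * zeta q ^+ (nat_of_ord (dot2 w.2 x.2)).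

Definition chiS (p q : nat) (w : Gpq p q) (S : {set Gpq p q}) : algC :=
  \sum_(s in S) chi w s.

Definition spectral (p q : nat) (S : {set Gpq p q}) : Prop :=
  exists Lambda : {set Gpq p q}, #|Lambda| = #|S| /\
    forall l l', l \in Lambda -> l' \in Lambda -> l != l' -> chiS (l - l') S = 0.

Definition diffset (p q : nat) (S : {set Gpq p q}) : {set Gpq p q} :=
  [set z : Gpq p q | [exists x in S, exists y in S, z == x - y]].

Definition inP (p q : nat) (u : 'Z_p * 'Z_p) : Gpq p q := (u, 0).
Definition inQ (p q : nat) (v : 'Z_q * 'Z_q) : Gpq p q := (0, v).

Definition scal2 (n : nat) (l : 'Z_n) (u : 'Z_n * 'Z_n) : 'Z_n * 'Z_n :=
  (l * u.1, l * u.2).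

(* Main.v *)
Require Import Defs.
From HB Require Import structures.
From mathcomp Require Import all_boot all_order all_algebra all_field.
From mathcomp Require Import algC algnum ring.
Set Implicit Arguments. Unset Strict Implicit. Unset Printing Implicit Defensive.
Import Order.TTheory GRing.Theory Num.Theory.
Local Open Scope ring_scope.

Definition ez n (a : 'Z_n) : algC := zeta n ^+ a.

Lemma zetaXn n : prime n -> zeta n ^+ n = 1.
Proof.
move=> pr; have n0 := prime_gt0 pr.
by rewrite /zeta -exprM mulnC exprM rootCK // sqrrN expr1n.
Qed.

Lemma zeta_neq1 n : prime n -> zeta n != 1.
Proof.
move=> pr; have n1 := prime_gt1 pr; have n0 := prime_gt0 pr.
apply/eqP => h.
have : (n.-root (-1 : algC) - 1) * (n.-root (-1) + 1) = 0.
  have -> : (n.-root (-1) - 1) * (n.-root (-1) + 1) = zeta n - 1 by rewrite /zeta; ring.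
  by rewrite h subrr.
move/eqP; rewrite mulf_eq0 => /orP[|].
  rewrite subr_eq0 => /eqP h1.
  have := rootCK (C:=algC) n0 (-1); rewrite h1 expr1n => /eqP.
  by rewrite -subr_eq0 opprK -(natrD _ 1 1) pnatr_eq0.
rewrite addr_eq0 => /eqP h1.
by have := rootC_lt0 (C:=algC) (-1) n1; rewrite h1 ltrN10.
Qed.

Lemma ZpXn n : prime n -> zeta n ^+ (Zp_trunc n).+2 = 1.
Proof. by move=> pr; rewrite Zp_cast ?prime_gt1 // zetaXn. Qed.

Lemma ezD n (a b : 'Z_n) : prime n -> ez (a + b) = ez a * ez b.
Proof. by move=> pr; rewrite /ez -exprD -[RHS](expr_mod _ (ZpXn pr)). Qed.

Lemma ezM n (a b : 'Z_n) : prime n -> ez (a * b) = ez a ^+ b.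
Proof. by move=> pr; rewrite /ez -exprM -[RHS](expr_mod _ (ZpXn pr)). Qed.

Lemma ez0 n : ez (0 : 'Z_n) = 1.
Proof. by rewrite /ez expr0. Qed.

Lemma Zp_unit n (c : 'Z_n) : prime n -> c != 0 -> c \is a GRing.unit.
Proof.
move=> pr c0; have n1 := prime_gt1 pr.
rewrite -(natr_Zp c) unitZpE // prime_coprime //.
apply/negP => /dvdnP[k hk].
move: c0; rewrite -val_eqE /= hk.
have := ltn_ord c; rewrite hk (Zp_cast n1).
case: k {hk} => [|k]; first by rewrite mul0n.
by rewrite mulSn ltnNge leq_addr.
Qed.

Lemma sum_ez n (c : 'Z_n) : prime n ->
  \sum_(x : 'Z_n) ez (c * x) = if c == 0 then n%:R else 0.
Proof.
move=> pr; have n1 := prime_gt1 pr.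
case: eqP => [->|/eqP c0].
  under eq_bigr do rewrite mul0r ez0.
  by rewrite sumr_const card_ord Zp_cast.
transitivity (\sum_(x : 'Z_n) ez x).
  by symmetry; exact: (reindex_inj (mulrI (Zp_unit pr c0))).
have : (zeta n - 1) * (\sum_(i < (Zp_trunc n).+2) zeta n ^+ i) = 0.
  by rewrite -subrX1 ZpXn // subrr.
move/eqP; rewrite mulf_eq0 subr_eq0 (negbTE (zeta_neq1 pr)) /= => /eqP.
exact.
Qed.

Lemma count_lemma n (T : finType) (L : {set T}) (f : T -> 'Z_n * 'Z_n) : prime n ->
  (forall w, w != 0 -> \sum_(l in L) ez (dot2 (f l) w) = 0) ->
  #|L| = (n ^ 2 * #|[set l in L | f l == 0%R]|)%N.
Proof.
move=> pr H; have n1 := prime_gt1 pr.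
have E1 : \sum_(w : 'Z_n * 'Z_n) \sum_(l in L) ez (dot2 (f l) w) = #|L|%:R.
  rewrite (bigD1 (0 : 'Z_n * 'Z_n)) //= [X in _ + X]big1 ?addr0; last by move=> w /H.
  have -> : \sum_(l in L) ez (dot2 (f l) 0) = \sum_(l in L) 1.
    by apply: eq_bigr => l _; rewrite /dot2 /= !mulr0 addr0 ez0.
  by rewrite sumr_const.
have E2 : \sum_(w : 'Z_n * 'Z_n) \sum_(l in L) ez (dot2 (f l) w)
   = \sum_(l in L) (if f l == 0 then (n ^ 2)%:R else 0).
  rewrite exchange_big /=; apply: eq_bigr => l _.
  have -> : \sum_(w : 'Z_n * 'Z_n) ez (dot2 (f l) w)
     = \sum_(i : 'Z_n) \sum_(j : 'Z_n) (ez ((f l).1 * i) * ez ((f l).2 * j)).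
    by rewrite pair_bigA; apply: eq_bigr => -[i j] _; rewrite /dot2 /= ezD.
  under eq_bigr do rewrite -mulr_sumr.
  rewrite -mulr_suml !sum_ez //.
  case: (f l) => a b /=; rewrite xpair_eqE.
  by case: eqP; case: eqP; rewrite ?mulr0 ?mul0r // -natrM mulnn.
move: E1; rewrite E2 -big_mkcondr /= sumr_const => /eqP.
rewrite -mulrnA eqr_nat => /eqP <-; congr (_ * _)%N.
by apply: eq_card => l; rewrite inE.
Qed.
Lemma galois_lemma n (T : finType) (L : {set T}) (f : T -> 'Z_n * 'Z_n)
  (lam : 'Z_n) w : prime n -> lam != 0 ->
  \sum_(l in L) ez (dot2 (f l) (scal2 lam w)) = 0 ->
  \sum_(l in L) ez (dot2 (f l) w) = 0.
Proof.
move=> pr l0 H; have n1 := prime_gt1 pr.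
have lu := Zp_unit pr l0.
set k := lam^-1.
have ku : k \is a GRing.unit by rewrite unitrV.
have cop : coprime k n.
  by rewrite coprime_sym -unitZpE // natr_Zp.
have [u Du] := Qn_aut_exists cop.
have E := congr1 u H; rewrite rmorph0 rmorph_sum in E.
apply: (etrans _ E); apply: eq_bigr => l _.
rewrite Du; last by rewrite /ez exprAC zetaXn // expr1n.
rewrite -ezM //; congr ez.
rewrite /dot2 /scal2 /=.
have -> : (f l).1 * (lam * w.1) + (f l).2 * (lam * w.2)
        = lam * ((f l).1 * w.1 + (f l).2 * w.2) by ring.
by rewrite [RHS]mulrC mulrA /k mulVr // mul1r.
Qed.
Lemma col_orth (T : finType) (S L : {set T}) (c d : T -> T -> algC) :
  #|L| = #|S| ->
  (forall l l', l \in L -> l' \in L ->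
     \sum_(s in S) c l s * d l' s = if l == l' then #|S|%:R else 0) ->
  forall s s', s \in S -> s' \in S -> s != s' ->
    \sum_(l in L) d l s * c l s' = 0.
Proof.
move=> hLS H s s' sS s'S ss'.
set m := #|S|.
pose sv (j : 'I_m) : T := enum_val j.
pose lv (i : 'I_m) : T := enum_val (cast_ord (esym hLS) i).
have lvL i : lv i \in L by exact: enum_valP.
have lv_inj : injective lv.
  by move=> i i' /enum_val_inj /cast_ord_inj.
have sumL (F : T -> algC) : \sum_(l in L) F l = \sum_(i < m) F (lv i).
  rewrite big_enum_val (reindex (cast_ord (esym hLS))) //.
  by exists (cast_ord hLS) => i _; rewrite ?cast_ordK ?cast_ordKV.
pose A : 'M[algC]_m := \matrix_(i, j) c (lv i) (sv j).
pose B : 'M[algC]_m := \matrix_(i, j) d (lv j) (sv i).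
have m0 : m%:R != 0 :> algC.
  by rewrite pnatr_eq0 -lt0n; apply/card_gt0P; exists s.
have AB : (m%:R^-1 *: A) *m B = 1%:M.
  apply/matrixP => i i'; rewrite -scalemxAl !mxE.
  have -> : \sum_j A i j * B j i' = \sum_(s in S) c (lv i) s * d (lv i') s.
    by rewrite (big_enum_val (fun s => c (lv i) s * d (lv i') s)); apply: eq_bigr => j _; rewrite !mxE.
  rewrite H // (inj_eq lv_inj).
  by case: eqP => _; rewrite ?mulr0 ?mulVf.
have BA := mulmx1C AB.
move/matrixP: BA => /(_ (enum_rank_in sS s) (enum_rank_in sS s')).
rewrite -scalemxAr !mxE.
have -> : (enum_rank_in sS s == enum_rank_in sS s') = false.
  apply/negP => /eqP h; move: ss'.
  by rewrite -(enum_rankK_in sS sS) -(enum_rankK_in sS s'S) h eqxx.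
move/eqP; rewrite mulf_eq0 invr_eq0 (negbTE m0) /= => /eqP E.
rewrite sumL; apply: (etrans _ E); apply: eq_bigr => i _; rewrite !mxE.
by rewrite /sv !enum_rankK_in.
Qed.
Lemma scal2_neq0 n (lam : 'Z_n) (w : 'Z_n * 'Z_n) : prime n -> lam != 0 -> w != 0 ->
  scal2 lam w != 0.
Proof.
move=> pr l0 w0; have lu := Zp_unit pr l0.
apply: contra w0; case: w => a b; rewrite /scal2 /= xpair_eqE => /andP[/eqP ha /eqP hb].
by rewrite -(mulKr lu a) -(mulKr lu b) ha hb !mulr0.
Qed.

Lemma side n (T : finType) (L : {set T}) (f : T -> 'Z_n * 'Z_n)
  (P : pred ('Z_n * 'Z_n)) : prime n -> ~~ (n ^ 2 %| #|L|)%N ->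
  (forall w, w != 0 -> P w -> \sum_(l in L) ez (dot2 (f l) w) = 0) ->
  exists u, u != 0 /\ forall lam, lam != 0 -> ~~ P (scal2 lam u).
Proof.
move=> pr ndiv H.
case E: [exists u : 'Z_n * 'Z_n, (u != 0) && [forall lam : 'Z_n, (lam != 0) ==> ~~ P (scal2 lam u)]].
  move/existsP: E => [u /andP[u0 /forallP h]]; exists u; split => // lam l0.
  by have /implyP := h lam; apply.
exfalso; move/negP: ndiv; apply.
rewrite (@count_lemma n T L f pr); first exact: dvdn_mulr (dvdnn _).
move=> w w0.
move/negbT: E; rewrite negb_exists => /forallP /(_ w).
rewrite w0 /= negb_forall => /existsP [lam].
rewrite negb_imply negbK => /andP [l0 Pw].
apply: (galois_lemma pr l0); apply: H => //.
exact: scal2_neq0.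
Qed.

Lemma chiE p q (w x : Gpq p q) :
  chi w x = ez (dot2 w.1 x.1) * ez (dot2 w.2 x.2).
Proof. by []. Qed.

Lemma dot2Dl n (u u' a : 'Z_n * 'Z_n) : dot2 (u + u') a = dot2 u a + dot2 u' a.
Proof. by rewrite /dot2 /=; ring. Qed.
Lemma dot2Dr n (u a a' : 'Z_n * 'Z_n) : dot2 u (a + a') = dot2 u a + dot2 u a'.
Proof. by rewrite /dot2 /=; ring. Qed.
Lemma dot2N n (u a : 'Z_n * 'Z_n) : dot2 (- u) a = dot2 u (- a).
Proof. by rewrite /dot2 /=; ring. Qed.
Lemma dot2_0l n (a : 'Z_n * 'Z_n) : dot2 0 a = 0.
Proof. by rewrite /dot2 /=; ring. Qed.
Lemma dot2_0r n (a : 'Z_n * 'Z_n) : dot2 a 0 = 0.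
Proof. by rewrite /dot2 /=; ring. Qed.

Lemma ndiv_sq p q m : prime p -> prime q -> p != q ->
  gcdn m (p ^ 2 * q ^ 2) = (p * q)%N -> ~~ (p ^ 2 %| m)%N.
Proof.
move=> pp pq pnq hg; apply/negP => hd.
have : (p ^ 2 %| p * q)%N by rewrite -hg dvdn_gcd hd dvdn_mulr.
rewrite expnS expn1 dvdn_pmul2l ?prime_gt0 // dvdn_prime2 //.
by rewrite (negbTE pnq).
Qed.

Unset Implicit Arguments.

Theorem lemma4p5 (p q : nat) (S : {set Gpq p q}) :
  prime p -> prime q -> p != q ->
  spectral S ->
  gcdn #|S| (p ^ 2 * q ^ 2) = (p * q)%N ->
  (p * q < #|S|)%N -> (#|S| < p * q * minn p q)%N ->
  exists u : 'Z_p * 'Z_p, exists v : 'Z_q * 'Z_q,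
    [/\ u != 0, v != 0,
        (forall lam : 'Z_p, lam != 0 -> inP q (scal2 lam u) \notin diffset S) &
        (forall mu : 'Z_q, mu != 0 -> inQ p (scal2 mu v) \notin diffset S)].
Proof.
move=> pp pq pnq [L [hLS hL]] hg _ _.
have chiD (a b x : Gpq p q) : chi (a + b) x = chi a x * chi b x.
  rewrite !chiE /= !dot2Dl !ezD //.
  by rewrite mulrACA.
have chiDr (w x y : Gpq p q) : chi w (x + y) = chi w x * chi w y.
  rewrite !chiE /= !dot2Dr !ezD //.
  by rewrite mulrACA.
have chiN (w x : Gpq p q) : chi (- w) x = chi w (- x).
  by rewrite !chiE /= !dot2N.
have col := @col_orth _ S L (@chi p q) (fun l s => chi (- l) s) hLS.
have row : forall l l', l \in L -> l' \in L ->
    \sum_(s in S) chi l s * chi (- l') s = if l == l' then #|S|%:R else 0.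
  move=> l l' lL l'L.
  under eq_bigr do rewrite -chiD.
  case: eqP => [<-|/eqP ll'].
    under eq_bigr do rewrite subrr.
    have -> : \sum_(i in S) chi 0 i = \sum_(i in S) 1.
      by apply: eq_bigr => i _; rewrite chiE !dot2_0l !ez0 mulr1.
    by rewrite sumr_const.
  exact: hL.
have key : forall x y, x \in S -> y \in S -> x != y ->
    \sum_(l in L) chi l (y - x) = 0.
  move=> x y xS yS xy; apply: (etrans _ (col row x y xS yS xy)).
  by apply: eq_bigr => l _; rewrite chiN -chiDr addrC.
have hdiff : forall z, z != 0 -> z \in diffset S -> \sum_(l in L) chi l z = 0.
  move=> z z0 zin; move: zin z0; rewrite inE => /existsP [x /andP [xS /existsP [y /andP [yS /eqP ->]]]] z0.
  apply: (key y x) => //; apply: contra z0 => /eqP ->; by rewrite subrr.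
have ndp : ~~ (p ^ 2 %| #|L|)%N by rewrite hLS; exact: ndiv_sq pp pq pnq hg.
have ndq : ~~ (q ^ 2 %| #|L|)%N.
  by rewrite hLS; apply: ndiv_sq pq pp _ _ => //; [rewrite eq_sym | rewrite mulnC [(q * p)%N]mulnC].
have [u [u0 hu]] : exists u : 'Z_p * 'Z_p, u != 0 /\ forall lam, lam != 0 -> ~~ (inP q (scal2 lam u) \in diffset S).
  apply: (@side p _ L (fun l => l.1) (fun w => inP q w \in diffset S) pp ndp) => w w0 win.
  have nz : inP q w != 0 by rewrite /inP -pair_eqE /= negb_and w0.
  apply: (etrans _ (hdiff _ nz win)); apply: eq_bigr => l _.
  by rewrite chiE /= dot2_0r ez0 mulr1.
have [v [v0 hv]] : exists v : 'Z_q * 'Z_q, v != 0 /\ forall mu, mu != 0 -> ~~ (inQ p (scal2 mu v) \in diffset S).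
  apply: (@side q _ L (fun l => l.2) (fun w => inQ p w \in diffset S) pq ndq) => w w0 win.
  have nz : inQ p w != 0.
    rewrite /inQ; apply: contra w0 => /eqP h; apply/eqP; exact: (congr1 snd h).
  apply: (etrans _ (hdiff _ nz win)); apply: eq_bigr => l _.
  by rewrite chiE /= dot2_0r ez0 mul1r.
by exists u, v; split.
Qed.
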